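(* Let $\mathrm X$ be the Cantor set, let $\mathrm U,\mathrm V\subseteq\mathrm X$ be open with $\mathrm U\neq\mathrm X$, and let $h:\mathrm U\to\mathrm V$ be a homeomorphism. For $n\in\mathbb Z$ let $\mathrm X_{-n}=\mathrm{dom}(h^n)$ and $h_n=h^n:\mathrm X_{-n}\to\mathrm X_n$, and let $R=\{(r,x,s,y)\in\mathbb Z\times\mathrm X\times\mathbb Z\times\mathrm X: x\in\mathrm X_{s-r},\ h^{r-s}(x)=y\}$. Let $(\mathrm U_k)_{k\ge0}$ be an increasing sequence of clopen subsets of $\mathrm X$ with $\bigcup_k\mathrm U_k=\mathrm U$. For each $k$, let $g_k=h|_{\mathrm U_k}:\mathrm U_k\to h(\mathrm U_k)$, $\mathrm X^k_{-n}=\mathrm{dom}(g_k^n)$, and $R_k=\{(r,x,s,y)\in\mathbb Z\times\mathrm X\times\mathbb Z\times\mathrm X: x\in\mathrm X^k_{s-r},\ h^{r-s}(x)=y\}$. Then each $R_k$ is an equivalence relation on $\mathbb Z\times\mathrm X$ whose quotient space is Hausdorff (i.e. $R_k$ is proper), $R_k\subseteq R_{k+1}$ for all $k$, and $R=\bigcup_{k}R_k$. In particular $R$ is approximately proper.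
   Context: Here $\mathrm{dom}(h^n)$ denotes the domain of the $n$-fold composition of the partial bijection $h$ (for $n<0$, of $(h^{-1})^{|n|}$; $\mathrm{dom}(h^0)=\mathrm X$). These data define partial actions of $\mathbb Z$ on $\mathrm X$. An equivalence relation on a locally compact, second countable, Hausdorff space is proper if its quotient space is Hausdorff, and approximately proper if it is the union of an increasing sequence of proper equivalence relations. *)

(* Defs.v *)
(* The Cantor set is modelled as nat -> bool (= {0,1}^N)
   with the product topology, described via cylinder neighbourhoods. *)
From Stdlib Require Import ZArith PArith.

Definition Cantor := nat -> bool.

Definition agree (n : nat) (x y : Cantor) : Prop := forall i, i < n -> x i = y i.

Definition is_open (A : Cantor -> Prop) : Prop :=
  forall x, A x -> exists n, forall y, agree n x y -> A y.

Definition is_closed (A : Cantor -> Prop) : Prop := is_open (fun x => ~ A x).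

Definition is_clopen (A : Cantor -> Prop) : Prop := is_open A /\ is_closed A.

Definition continuous_on (D : Cantor -> Prop) (f : Cantor -> Cantor) : Prop :=
  forall x, D x -> forall n, exists m, forall y, D y -> agree m x y -> agree n (f x) (f y).

Definition homeo_between (U V : Cantor -> Prop) (h hinv : Cantor -> Cantor) : Prop :=
  (forall x, U x -> V (h x)) /\ (forall y, V y -> U (hinv y)) /\
  (forall x, U x -> hinv (h x) = x) /\ (forall y, V y -> h (hinv y) = y) /\
  continuous_on U h /\ continuous_on V hinv.

Fixpoint iter_dom (D : Cantor -> Prop) (f : Cantor -> Cantor) (n : nat) (x : Cantor) : Prop :=
  match n with
  | O => True
  | S m => D x /\ iter_dom D f m (f x)
  end.

(* dom(g^z) for z : Z, where g is a partial bijection with domain D, map f,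
   range Dinv and inverse finv *)
Definition zdom (D : Cantor -> Prop) (f : Cantor -> Cantor)
    (Dinv : Cantor -> Prop) (finv : Cantor -> Cantor) (z : Z) : Cantor -> Prop :=
  match z with
  | Z0 => fun _ => True
  | Zpos p => iter_dom D f (Pos.to_nat p)
  | Zneg p => iter_dom Dinv finv (Pos.to_nat p)
  end.

(* the map g^z (only meaningful on zdom ... z) *)
Definition zpow (f finv : Cantor -> Cantor) (z : Z) (x : Cantor) : Cantor :=
  match z with
  | Z0 => x
  | Zpos p => Nat.iter (Pos.to_nat p) f x
  | Zneg p => Nat.iter (Pos.to_nat p) finv x
  end.

Definition ZX := (Z * Cantor)%type.

Definition is_equiv (R : ZX -> ZX -> Prop) : Prop :=
  (forall p, R p p) /\ (forall p q, R p q -> R q p) /\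
  (forall p q t, R p q -> R q t -> R p t).

Definition is_openZX (A : ZX -> Prop) : Prop :=
  forall r x, A (r, x) -> exists n, forall y, agree n x y -> A (r, y).

Definition saturated (R : ZX -> ZX -> Prop) (A : ZX -> Prop) : Prop :=
  forall p q, R p q -> A p -> A q.

(* Open sets of the quotient are exactly the images of saturated open sets,
   so this unfolds to: distinct classes are separated by disjoint saturated
   open sets. *)
Definition quotient_hausdorff (R : ZX -> ZX -> Prop) : Prop :=
  forall p q, ~ R p q ->
    exists A B : ZX -> Prop,
      is_openZX A /\ is_openZX B /\ saturated R A /\ saturated R B /\
      A p /\ B q /\ (forall t, A t -> B t -> False).

Definition proper_rel (R : ZX -> ZX -> Prop) : Prop :=
  is_equiv R /\ quotient_hausdorff R.

Definition approx_proper (R : ZX -> ZX -> Prop) : Prop :=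
  exists Rs : nat -> ZX -> ZX -> Prop,
    (forall k, proper_rel (Rs k)) /\
    (forall k p q, Rs k p q -> Rs (S k) p q) /\
    (forall p q, R p q <-> exists k, Rs k p q).

Definition relR (U V : Cantor -> Prop) (h hinv : Cantor -> Cantor) (p q : ZX) : Prop :=
  zdom U h V hinv (fst p - fst q)%Z (snd p) /\
  zpow h hinv (fst p - fst q)%Z (snd p) = snd q.

Definition image (h : Cantor -> Cantor) (W : Cantor -> Prop) : Cantor -> Prop :=
  fun y => exists x, W x /\ h x = y.

(* R_k, using g_k = h|_{W} : W -> h(W) with W = U_k *)
Definition relRk (W : Cantor -> Prop) (h hinv : Cantor -> Cantor) (p q : ZX) : Prop :=
  zdom W h (image h W) hinv (fst p - fst q)%Z (snd p) /\
  zpow h hinv (fst p - fst q)%Z (snd p) = snd q.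

(* Main.v *)
Require Import Defs.
From Stdlib Require Import ZArith Lia Classical FunctionalExtensionality.

Lemma iter_succ_r {A} (f:A->A) n x : Nat.iter (S n) f x = Nat.iter n f (f x).
Proof. induction n; [reflexivity|]. simpl in *. rewrite IHn. reflexivity. Qed.

Lemma iter_add {A} (f:A->A) m n x : Nat.iter (m+n) f x = Nat.iter n f (Nat.iter m f x).
Proof.
  revert x; induction m; intros x; [reflexivity|].
  change (S m + n) with (S (m+n)). rewrite !iter_succ_r, IHm. reflexivity.
Qed.

Lemma dom_add D f m n x : iter_dom D f (m+n) x <-> iter_dom D f m x /\ iter_dom D f n (Nat.iter m f x).
Proof.
  revert x; induction m; intro x.
  - cbn [iter_dom Nat.add Nat.iter]. simpl. tauto.
  - change (S m + n) with (S (m+n)). cbn [iter_dom]. rewrite IHm, iter_succ_r. tauto.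
Qed.

Definition pbij (D : Cantor -> Prop) f (E : Cantor -> Prop) g :=
  (forall x, D x -> E (f x)) /\ (forall y, E y -> D (g y)) /\
  (forall x, D x -> g (f x) = x) /\ (forall y, E y -> f (g y) = y).

Lemma pbij_swap D f E g : pbij D f E g -> pbij E g D f.
Proof. unfold pbij; tauto. Qed.

Lemma fb D f E g n x : pbij D f E g -> iter_dom D f n x ->
  iter_dom E g n (Nat.iter n f x) /\ Nat.iter n g (Nat.iter n f x) = x.
Proof.
  intros [H1 [H2 [H3 H4]]]. revert x; induction n; intros x Hx.
  - simpl; auto.
  - destruct Hx as [Dx Hn]. destruct (IHn _ Hn) as [IH1 IH2].
    set (y := Nat.iter (S n) f x).
    assert (Hy : y = Nat.iter n f (f x)) by apply iter_succ_r.
    replace (S n) with (n+1) by lia.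
    rewrite dom_add, iter_add. rewrite Hy, IH2. simpl.
    split; [split; [exact IH1| split; auto] | apply H3; auto].
Qed.

Lemma mix D f E g m n x : pbij D f E g -> iter_dom D f m x -> iter_dom E g n (Nat.iter m f x) ->
 (n <= m -> iter_dom D f (m-n) x /\ Nat.iter n g (Nat.iter m f x) = Nat.iter (m-n) f x) /\
 (m <= n -> iter_dom E g (n-m) x /\ Nat.iter n g (Nat.iter m f x) = Nat.iter (n-m) g x).
Proof.
  intros P Hx Hy. split; intros Hle.
  - destruct (Nat.le_exists_sub n m Hle) as [k [Hk _]]. subst m.
    replace (k + n - n) with k by lia.
    rewrite dom_add in Hx. destruct Hx as [Hx1 Hx2].
    rewrite iter_add. split; auto. apply (fb D f E g); auto.
  - destruct (Nat.le_exists_sub m n Hle) as [k [Hk _]]. subst n.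
    rewrite Nat.add_comm in *. replace (m + k - m) with k by lia.
    rewrite dom_add in Hy. destruct Hy as [Hy1 Hy2].
    destruct (fb D f E g m x P Hx) as [_ Hb]. rewrite Hb in Hy2.
    rewrite iter_add, Hb. auto.
Qed.

Lemma zdom_pos D f E g m : zdom D f E g (Z.of_nat m) = iter_dom D f m.
Proof. destruct m; [reflexivity|]. unfold zdom. simpl. rewrite SuccNat2Pos.id_succ. reflexivity. Qed.
Lemma zdom_neg D f E g m : zdom D f E g (- Z.of_nat m) = iter_dom E g m.
Proof. destruct m; [reflexivity|]. unfold zdom. simpl. rewrite SuccNat2Pos.id_succ. reflexivity. Qed.
Lemma zpow_pos (f g : Cantor -> Cantor) m : zpow f g (Z.of_nat m) = Nat.iter m f.
Proof. destruct m; [reflexivity|]. unfold zpow. simpl. rewrite SuccNat2Pos.id_succ. reflexivity. Qed.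
Lemma zpow_neg (f g : Cantor -> Cantor) m : zpow f g (- Z.of_nat m) = Nat.iter m g.
Proof. destruct m; [reflexivity|]. unfold zpow. simpl. rewrite SuccNat2Pos.id_succ. reflexivity. Qed.

Lemma zcase z : exists m, z = Z.of_nat m \/ z = (- Z.of_nat m)%Z.
Proof.
  destruct z as [|p|p].
  - exists 0; left; reflexivity.
  - exists (Pos.to_nat p); left; rewrite positive_nat_Z; reflexivity.
  - exists (Pos.to_nat p); right; rewrite positive_nat_Z; reflexivity.
Qed.

Definition relG D f E g (p q : ZX) : Prop :=
  zdom D f E g (fst p - fst q)%Z (snd p) /\ zpow f g (fst p - fst q)%Z (snd p) = snd q.

Lemma relG_refl D f E g p : relG D f E g p p.
Proof. unfold relG. rewrite Z.sub_diag. simpl. auto. Qed.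

Lemma relG_sym D f E g p q : pbij D f E g -> relG D f E g p q -> relG D f E g q p.
Proof.
  intros P. destruct p as [r x], q as [s y]; unfold relG; simpl. intros [Hd He].
  destruct (zcase (r - s)) as [m [Hm|Hm]]; rewrite Hm in Hd, He.
  - rewrite zdom_pos in Hd; rewrite zpow_pos in He.
    replace (s - r)%Z with (- Z.of_nat m)%Z by lia. rewrite zdom_neg, zpow_neg.
    subst y. apply (fb D f E g); auto.
  - rewrite zdom_neg in Hd; rewrite zpow_neg in He.
    replace (s - r)%Z with (Z.of_nat m)%Z by lia. rewrite zdom_pos, zpow_pos.
    subst y. apply (fb E g D f); auto. apply pbij_swap; auto.
Qed.

Lemma relG_trans D f E g p q t : pbij D f E g -> relG D f E g p q -> relG D f E g q t -> relG D f E g p t.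
Proof.
  intros P. destruct p as [r x], q as [s y], t as [u w]; unfold relG; simpl.
  intros [d1 e1] [d2 e2].
  destruct (zcase (r - s)) as [m [Hm|Hm]]; rewrite Hm in d1, e1;
  destruct (zcase (s - u)) as [n [Hn|Hn]]; rewrite Hn in d2, e2;
  rewrite ?zdom_pos, ?zdom_neg in d1; rewrite ?zdom_pos, ?zdom_neg in d2;
  rewrite ?zpow_pos, ?zpow_neg in e1; rewrite ?zpow_pos, ?zpow_neg in e2;
  subst y w.
  - replace (r - u)%Z with (Z.of_nat (m+n)) by lia. rewrite zdom_pos, zpow_pos.
    rewrite dom_add, iter_add. auto.
  - destruct (mix D f E g m n x P d1 d2) as [M1 M2].
    destruct (le_ge_dec n m) as [l|l].
    + replace (r - u)%Z with (Z.of_nat (m-n)) by lia. rewrite zdom_pos, zpow_pos.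
      destruct (M1 l); auto.
    + replace (r - u)%Z with (- Z.of_nat (n-m))%Z by lia. rewrite zdom_neg, zpow_neg.
      destruct (M2 l); auto.
  - destruct (mix E g D f m n x (pbij_swap _ _ _ _ P) d1 d2) as [M1 M2].
    destruct (le_ge_dec n m) as [l|l].
    + replace (r - u)%Z with (- Z.of_nat (m-n))%Z by lia. rewrite zdom_neg, zpow_neg.
      destruct (M1 l); auto.
    + replace (r - u)%Z with (Z.of_nat (n-m)) by lia. rewrite zdom_pos, zpow_pos.
      destruct (M2 l); auto.
  - replace (r - u)%Z with (- Z.of_nat (m+n))%Z by lia. rewrite zdom_neg, zpow_neg.
    rewrite dom_add, iter_add. auto.
Qed.

Lemma agree_mono n m x y : m <= n -> agree n x y -> agree m x y.
Proof. unfold agree; intros H1 H2 i Hi. apply H2; lia. Qed.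
Lemma agree_trans n x y z : agree n x y -> agree n y z -> agree n x z.
Proof. unfold agree; intros H1 H2 i Hi. rewrite H1, H2; auto. Qed.
Lemma agree_sym n x y : agree n x y -> agree n y x.
Proof. unfold agree; intros H1 i Hi. rewrite H1; auto. Qed.

Lemma iter_open D f : is_open D -> continuous_on D f -> forall n,
  is_open (iter_dom D f n) /\ continuous_on (iter_dom D f n) (Nat.iter n f).
Proof.
  intros HD Hf n; induction n.
  - split. intros x _; exists 0; intros; exact I. intros x _ N; exists N; intros y _ H; exact H.
  - destruct IHn as [Ho Hc]. split.
    + intros x [Dx Hx]. destruct (Ho _ Hx) as [m1 Hm1]. destruct (Hf x Dx m1) as [m2 Hm2].
      destruct (HD x Dx) as [m3 Hm3]. exists (Nat.max m2 m3). intros y Hy.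
      assert (Dy: D y) by (apply Hm3; eapply agree_mono; [apply Nat.le_max_r|exact Hy]).
      split; [exact Dy|]. apply Hm1. apply Hm2; auto.
      eapply agree_mono; [apply Nat.le_max_l|exact Hy].
    + intros x [Dx Hx] N. destruct (Hc _ Hx N) as [m1 Hm1]. destruct (Hf x Dx m1) as [m2 Hm2].
      exists m2. intros y [Dy Hy] Hxy. rewrite !iter_succ_r. apply Hm1; auto.
Qed.

Lemma iter_closed D f : is_open D -> is_closed D -> continuous_on D f -> forall n,
  is_closed (iter_dom D f n).
Proof.
  intros HD HDc Hf n; induction n; unfold is_closed, is_open in *.
  - intros x Hx; exfalso; apply Hx; exact I.
  - intros x Hx. destruct (classic (D x)) as [Dx|nDx].
    + assert (H : ~ iter_dom D f n (f x)) by (intro; apply Hx; split; auto).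
      destruct (IHn _ H) as [m1 Hm1]. destruct (Hf x Dx m1) as [m2 Hm2].
      destruct (HD x Dx) as [m3 Hm3]. exists (Nat.max m2 m3). intros y Hy [Dy Hy'].
      apply (Hm1 (f y)); auto. apply Hm2; auto.
      eapply agree_mono; [apply Nat.le_max_l|exact Hy].
    + destruct (HDc x nDx) as [m Hm]. exists m. intros y Hy [Dy _]. exact (Hm y Hy Dy).
Qed.

Lemma zopen D f E g : is_open D -> continuous_on D f -> is_open E -> continuous_on E g ->
  forall c, is_open (zdom D f E g c) /\ continuous_on (zdom D f E g c) (zpow f g c).
Proof.
  intros. destruct (zcase c) as [m [->| ->]];
  [rewrite zdom_pos, zpow_pos | rewrite zdom_neg, zpow_neg]; apply iter_open; auto.
Qed.

Lemma closed_pos D f : is_open D -> is_closed D -> continuous_on D f -> forall m x y,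
  ~ (iter_dom D f m x /\ Nat.iter m f x = y) -> exists N, forall x' y',
  agree N x x' -> agree N y y' -> ~ (iter_dom D f m x' /\ Nat.iter m f x' = y').
Proof.
  intros HD HDc Hf m x y Hn.
  destruct (classic (iter_dom D f m x)) as [Hd|Hd].
  - assert (Hne: Nat.iter m f x <> y) by tauto.
    assert (Hex : exists i, Nat.iter m f x i <> y i).
    { apply not_all_ex_not. intro Hall. apply Hne. apply functional_extensionality. exact Hall. }
    destruct Hex as [i Hi].
    destruct (proj2 (iter_open D f HD Hf m) x Hd (S i)) as [M HM].
    exists (Nat.max M (S i)). intros x' y' Hx Hy [Hd' He'].
    apply Hi. rewrite (HM x' Hd' (agree_mono _ _ _ _ (Nat.le_max_l _ _) Hx) i (Nat.lt_succ_diag_r i)).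
    rewrite He'. symmetry. apply Hy. lia.
  - destruct (iter_closed D f HD HDc Hf m x Hd) as [N HN]. exists N.
    intros x' y' Hx _ [Hd' _]. exact (HN x' Hx Hd').
Qed.

Lemma sat_open D f E g : pbij D f E g -> is_open D -> continuous_on D f -> is_open E -> continuous_on E g ->
  forall r x N, is_openZX (fun t => exists a, (fst a = r /\ agree N x (snd a)) /\ relG D f E g a t).
Proof.
  intros P HD Hf HE Hg r x N u z [[r' x'] [[Hr Ha] Hrel]]. simpl in Hr, Ha; subst r'.
  apply relG_sym in Hrel; auto. unfold relG in Hrel; simpl in Hrel. destruct Hrel as [Hd He].
  destruct (zopen D f E g HD Hf HE Hg (u - r)) as [Ho Hc].
  destruct (Ho z Hd) as [n1 Hn1]. destruct (Hc z Hd N) as [n2 Hn2].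
  exists (Nat.max n1 n2). intros z' Hz'.
  assert (Hd': zdom D f E g (u-r) z') by (apply Hn1; eapply agree_mono; [apply Nat.le_max_l|exact Hz']).
  exists (r, zpow f g (u - r) z'). split.
  - split; [reflexivity|]. simpl. eapply agree_trans; [exact Ha|]. rewrite <- He.
    apply Hn2; auto. eapply agree_mono; [apply Nat.le_max_r|exact Hz'].
  - apply relG_sym; auto. unfold relG; simpl. split; auto.
Qed.

Lemma proper_G D f E g : pbij D f E g -> is_open D -> is_closed D -> continuous_on D f ->
  is_open E -> continuous_on E g -> proper_rel (relG D f E g).
Proof.
  intros P HD HDc Hf HE Hg. split.
  { split; [|split]. apply relG_refl. intros; apply relG_sym; auto.
    intros; eapply relG_trans; eauto. }
  intros [r x] [s y] Hn.
  assert (HC : exists N, forall x' y', agree N x x' -> agree N y y' -> ~ relG D f E g (r,x') (s,y')).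
  { destruct (zcase (r - s)) as [m [Hm|Hm]].
    - unfold relG in Hn; simpl in Hn. rewrite Hm, zdom_pos, zpow_pos in Hn.
      destruct (closed_pos D f HD HDc Hf m x y Hn) as [N HN]. exists N.
      intros x' y' Hx Hy. unfold relG; simpl. rewrite Hm, zdom_pos, zpow_pos. apply HN; auto.
    - assert (Hn' : ~ relG D f E g (s,y) (r,x)) by (intro; apply Hn; apply relG_sym; auto).
      unfold relG in Hn'; simpl in Hn'.
      replace (s - r)%Z with (Z.of_nat m) in Hn' by lia. rewrite zdom_pos, zpow_pos in Hn'.
      destruct (closed_pos D f HD HDc Hf m y x Hn') as [N HN]. exists N.
      intros x' y' Hx Hy Hr. apply (HN y' x' Hy Hx).
      apply relG_sym in Hr; auto. unfold relG in Hr; simpl in Hr.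
      replace (s - r)%Z with (Z.of_nat m) in Hr by lia. rewrite zdom_pos, zpow_pos in Hr. exact Hr. }
  destruct HC as [N HN].
  exists (fun t => exists a, (fst a = r /\ agree N x (snd a)) /\ relG D f E g a t),
         (fun t => exists a, (fst a = s /\ agree N y (snd a)) /\ relG D f E g a t).
  split; [apply sat_open; auto|]. split; [apply sat_open; auto|].
  split; [intros p q Hpq [a [Ha Hap]]; exists a; split; auto; eapply relG_trans; eauto|].
  split; [intros p q Hpq [a [Ha Hap]]; exists a; split; auto; eapply relG_trans; eauto|].
  split; [exists (r,x); split; [split; [reflexivity| intros i _; reflexivity] | apply relG_refl]|].
  split; [exists (s,y); split; [split; [reflexivity| intros i _; reflexivity] | apply relG_refl]|].
  intros t [[r' x'] [[Ha1 Ha2] Hat]] [[s' y'] [[Hb1 Hb2] Hbt]]. simpl in *; subst.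
  apply (HN x' y' Ha2 Hb2). eapply relG_trans; [auto|exact Hat| apply relG_sym; auto].
Qed.

Lemma iter_dom_mono (D D' : Cantor -> Prop) f : (forall x, D x -> D' x) ->
  forall n x, iter_dom D f n x -> iter_dom D' f n x.
Proof. intros H n; induction n; intros x Hx; simpl in *; [auto| destruct Hx; auto]. Qed.

Lemma relG_mono (D D' E E' : Cantor -> Prop) f g p q : (forall x, D x -> D' x) -> (forall x, E x -> E' x) ->
  relG D f E g p q -> relG D' f E' g p q.
Proof.
  intros H1 H2 [Hd He]. split; auto.
  destruct (zcase (fst p - fst q)) as [m [Hm|Hm]]; rewrite Hm in *;
  rewrite ?zdom_pos, ?zdom_neg in *; eapply iter_dom_mono; eauto.
Qed.

Lemma exists_k (D : Cantor -> Prop) (Dk : nat -> Cantor -> Prop) f :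
  (forall k x, Dk k x -> Dk (S k) x) -> (forall x, D x -> exists k, Dk k x) ->
  forall m x, iter_dom D f m x -> exists k, iter_dom (Dk k) f m x.
Proof.
  intros Hinc Hcov.
  assert (Hle : forall k k' x, k <= k' -> Dk k x -> Dk k' x).
  { intros k k' x Hl; induction Hl; auto. }
  intros m; induction m; intros x Hx.
  - exists 0; exact I.
  - destruct Hx as [Dx Hm]. destruct (IHm _ Hm) as [k1 Hk1]. destruct (Hcov x Dx) as [k2 Hk2].
    exists (Nat.max k1 k2). split.
    + eapply Hle; [apply Nat.le_max_r|exact Hk2].
    + eapply iter_dom_mono; [|exact Hk1]. intros; eapply Hle; [apply Nat.le_max_l|eauto].
Qed.

Lemma relG_exists (D E : Cantor -> Prop) (Dk Ek : nat -> Cantor -> Prop) f g p q :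
  (forall k x, Dk k x -> Dk (S k) x) -> (forall x, D x -> exists k, Dk k x) ->
  (forall k x, Ek k x -> Ek (S k) x) -> (forall x, E x -> exists k, Ek k x) ->
  relG D f E g p q -> exists k, relG (Dk k) f (Ek k) g p q.
Proof.
  intros H1 H2 H3 H4 [Hd He]. unfold relG.
  destruct (zcase (fst p - fst q)) as [m [Hm|Hm]]; rewrite Hm in *;
  rewrite ?zdom_pos, ?zdom_neg in *.
  - destruct (exists_k D Dk f H1 H2 m _ Hd) as [k Hk]. exists k. rewrite zdom_pos. auto.
  - destruct (exists_k E Ek g H3 H4 m _ Hd) as [k Hk]. exists k. rewrite zdom_neg. auto.
Qed.

Theorem mainTheorem8
  (U V : Cantor -> Prop) (h hinv : Cantor -> Cantor)
  (hU : is_open U) (hV : is_open V) (hUX : exists x, ~ U x)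
  (hh : homeo_between U V h hinv)
  (Uk : nat -> Cantor -> Prop)
  (hUk_clopen : forall k, is_clopen (Uk k))
  (hUk_incr : forall k x, Uk k x -> Uk (S k) x)
  (hUk_union : forall x, U x <-> exists k, Uk k x) :
  (forall k, proper_rel (relRk (Uk k) h hinv)) /\
  (forall k p q, relRk (Uk k) h hinv p q -> relRk (Uk (S k)) h hinv p q) /\
  (forall p q, relR U V h hinv p q <-> exists k, relRk (Uk k) h hinv p q) /\
  approx_proper (relR U V h hinv).
Proof.
  destruct hh as [hUV [hVU [hK1 [hK2 [hc1 hc2]]]]].
  assert (Hsub : forall k x, Uk k x -> U x) by (intros k x H; apply hUk_union; eauto).
  assert (Himg_mono : forall k x, image h (Uk k) x -> image h (Uk (S k)) x).
  { intros k x [y [Hy Hyx]]; exists y; auto. }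
  assert (Himg_sub : forall k x, image h (Uk k) x -> V x).
  { intros k x [y [Hy Hyx]]; subst; eauto. }
  assert (Hprop : forall k, proper_rel (relRk (Uk k) h hinv)).
  { intro k. destruct (hUk_clopen k) as [HWo HWc].
    apply (proper_G (Uk k) h (image h (Uk k)) hinv).
    - split; [|split; [|split]].
      + intros x Hx; exists x; auto.
      + intros y [x [Hx <-]]. rewrite hK1; eauto.
      + intros x Hx; apply hK1; eauto.
      + intros y [x [Hx <-]]. rewrite hK1; eauto.
    - exact HWo.
    - exact HWc.
    - intros x Hx n. destruct (hc1 x (Hsub _ _ Hx) n) as [m Hm]. exists m. intros; apply Hm; eauto.
    - intros y [x [Hx Hxy]]. assert (Vy : V y) by (subst; eauto).
      destruct (hV y Vy) as [a Ha]. destruct (HWo x Hx) as [b Hb].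
      destruct (hc2 y Vy b) as [m Hm]. exists (Nat.max a m). intros y' Hy'.
      assert (Vy' : V y') by (apply Ha; eapply agree_mono; [apply Nat.le_max_l|exact Hy']).
      exists (hinv y'). split; [|apply hK2; auto].
      apply Hb. replace x with (hinv y) by (subst; apply hK1; eauto).
      apply Hm; auto. eapply agree_mono; [apply Nat.le_max_r|exact Hy'].
    - intros y Hy n. destruct (hc2 y (Himg_sub _ _ Hy) n) as [m Hm]. exists m.
      intros; apply Hm; eauto. }
  assert (Hinc : forall k p q, relRk (Uk k) h hinv p q -> relRk (Uk (S k)) h hinv p q).
  { intros k p q H. eapply relG_mono; [| |exact H]; auto. }
  assert (Hun : forall p q, relR U V h hinv p q <-> exists k, relRk (Uk k) h hinv p q).
  { intros p q; split.
    - intros H. apply (relG_exists U V Uk (fun k => image h (Uk k)) h hinv p q); auto.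
      + intros x Hx; apply hUk_union; auto.
      + intros y Vy. destruct (proj1 (hUk_union (hinv y)) (hVU y Vy)) as [k Hk].
        exists k. exists (hinv y); auto.
    - intros [k H]. eapply relG_mono; [| |exact H]; eauto. }
  split; [exact Hprop|]. split; [exact Hinc|]. split; [exact Hun|].
  exists (fun k => relRk (Uk k) h hinv). split; [exact Hprop|]. split; [exact Hinc|exact Hun].
Qed.
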